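(* Let $(\mathcal{A},\mu,\alpha)$ be a Hom-flexible superalgebra and $\mathcal{A}^-=(\mathcal{A},[-,-],\alpha)$ with $[x,y]=xy-(-1)^{|x||y|}yx$. Then $\widetilde{J}_{\mathcal{A}^-}=2S_{\mathcal{A}}$, i.e. for all homogeneous $x,y,z$, $[[x,y],\alpha(z)]-[\alpha(x),[y,z]]-(-1)^{|y||z|}[[x,z],\alpha(y)]=2\big(\widetilde{as}(x,y,z)+(-1)^{|x|(|y|+|z|)}\widetilde{as}(y,z,x)+(-1)^{|z|(|x|+|y|)}\widetilde{as}(z,x,y)\big)$.
   Context: $\mathcal{A}=\mathcal{A}_0\oplus\mathcal{A}_1$ is a $\mathbb{Z}_2$-graded vector space over an algebraically closed field $\mathbb{K}$ of characteristic $0$; $|x|$ is the parity of homogeneous $x$; $\mu(x,y)=xy$ is even bilinear and $\alpha$ even linear. $\widetilde{as}(x,y,z)=(xy)\alpha(z)-\alpha(x)(yz)$. A Hom-flexible superalgebra is a triple $(\mathcal{A},\mu,\alpha)$ with $\widetilde{as}(x,y,z)+(-1)^{|x||y|+|x||z|+|y||z|}\widetilde{as}(z,y,x)=0$ for all homogeneous $x,y,z$. $S_{\mathcal{A}}$ denotes the cyclic Hom-associator $S_{\mathcal{A}}(x,y,z)=\widetilde{as}(x,y,z)+(-1)^{|x|(|y|+|z|)}\widetilde{as}(y,z,x)+(-1)^{|z|(|x|+|y|)}\widetilde{as}(z,x,y)$. *)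

(* Defs.v *)
From HB Require Import structures.
From mathcomp Require Import all_boot all_order all_algebra.
Set Implicit Arguments. Unset Strict Implicit. Unset Printing Implicit Defensive.
Import GRing.Theory.
Local Open Scope ring_scope.

(* Parities are booleans (false = even, true = odd); a parity b is used as
   the natural number 0/1 in sign exponents, so (-1)^+(b1*b2) is (-1)^{|x||y|}. *)
Definition sgn (K : pzRingType) (n : nat) : K := (-1) ^+ n.

Definition Z2grading (K : fieldType) (V : lmodType K) (A : bool -> V -> Prop) :=
  [/\ (forall i, A i 0),
      (forall i (a : K) u v, A i u -> A i v -> A i (a *: u + v)),
      (forall v, exists v0 v1, [/\ A false v0, A true v1 & v = v0 + v1])
    & (forall v, A false v -> A true v -> v = 0)].

Definition even_bilinear (K : fieldType) (V : lmodType K) (A : bool -> V -> Prop)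
  (mu : V -> V -> V) :=
  [/\ (forall (a : K) x y z, mu (a *: x + y) z = a *: mu x z + mu y z),
      (forall (a : K) x y z, mu x (a *: y + z) = a *: mu x y + mu x z)
    & (forall i j x y, A i x -> A j y -> A (i (+) j) (mu x y))].

Definition even_linear (K : fieldType) (V : lmodType K) (A : bool -> V -> Prop)
  (alpha : V -> V) :=
  (forall (a : K) x y, alpha (a *: x + y) = a *: alpha x + alpha y) /\
  (forall i x, A i x -> A i (alpha x)).

Definition hasso (K : fieldType) (V : lmodType K) (mu : V -> V -> V) (alpha : V -> V)
  (x y z : V) : V :=
  mu (mu x y) (alpha z) - mu (alpha x) (mu y z).

Definition hom_flexible (K : fieldType) (V : lmodType K) (A : bool -> V -> Prop)
  (mu : V -> V -> V) (alpha : V -> V) :=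
  forall (px py pz : bool) (x y z : V), A px x -> A py y -> A pz z ->
    hasso mu alpha x y z
    + sgn K (px * py + px * pz + py * pz) *: hasso mu alpha z y x = 0.

Definition sbr (K : fieldType) (V : lmodType K) (mu : V -> V -> V)
  (px py : bool) (x y : V) : V :=
  mu x y - sgn K (px * py) *: mu y x.

Definition Jtilde (K : fieldType) (V : lmodType K) (mu : V -> V -> V) (alpha : V -> V)
  (px py pz : bool) (x y z : V) : V :=
  sbr mu (px (+) py) pz (sbr mu px py x y) (alpha z)
  - sbr mu px (py (+) pz) (alpha x) (sbr mu py pz y z)
  - sgn K (py * pz) *: sbr mu (px (+) pz) py (sbr mu px pz x z) (alpha y).

Definition SA (K : fieldType) (V : lmodType K) (mu : V -> V -> V) (alpha : V -> V)
  (px py pz : bool) (x y z : V) : V :=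
  hasso mu alpha x y z
  + sgn K (px * (py + pz)) *: hasso mu alpha y z x
  + sgn K (pz * (px + py)) *: hasso mu alpha z x y.

(* Main.v *)
Require Import Defs.
From HB Require Import structures.
From mathcomp Require Import all_boot all_order all_algebra.
From mathcomp Require Import ring.
Import GRing.Theory.
Local Open Scope ring_scope.

Section Dual.
Variables (K : fieldType) (V : lmodType K).
Definition dual := (K * V)%type.
HB.instance Definition _ := GRing.Zmodule.on dual.
Definition done_ : dual := (1, 0).
Definition dmul (a b : dual) : dual := (a.1 * b.1, a.1 *: b.2 + b.1 *: a.2).
Lemma dmulA : associative dmul.
Proof. move=> [a u] [b v] [c w]; rewrite /dmul /=; congr (_,_); first exact: mulrA.
by rewrite !scalerDr !scalerA !addrA (mulrC c a) (mulrC c b).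
Qed.
Lemma dmulC : commutative dmul.
Proof. by move=> [a u] [b v]; rewrite /dmul /= mulrC addrC. Qed.
Lemma dmul1 : left_id done_ dmul.
Proof. by move=> [a u]; rewrite /dmul /= mul1r scale1r scaler0 addr0. Qed.
Lemma dmulDl : left_distributive dmul +%R.
Proof. move=> [a u] [b v] [c w]; rewrite /dmul /=; congr (_,_); first exact: mulrDl.
by rewrite scalerDl !scalerDr addrACA. Qed.
Lemma done_neq0 : done_ != 0.
Proof. by apply/negP => /eqP [] /eqP; rewrite oner_eq0. Qed.
HB.instance Definition _ := GRing.Zmodule_isComNzRing.Build dual dmulA dmulC dmul1 dmulDl done_neq0.

Definition emb (v : V) : dual := (0, v).
Definition cst (k : K) : dual := (k, 0).
Lemma embD u v : emb (u + v) = emb u + emb v. Proof. by rewrite /emb; congr (_,_); rewrite addr0. Qed.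
Lemma embN u : emb (- u) = - emb u. Proof. by rewrite /emb; congr (_,_); rewrite oppr0. Qed.
Lemma embZ k u : emb (k *: u) = cst k * emb u.
Proof. by rewrite /emb /cst; congr (_,_) => /=; rewrite ?mulr0 // scaler0 addr0. Qed.
Lemma emb0 : emb 0 = 0. Proof. by []. Qed.
Lemma emb_inj : injective emb. Proof. by move=> u v []. Qed.
Lemma cst_sgn n : cst (sgn K n) = (-1) ^+ n.
Proof. elim: n => [|n IH]; first by [].
rewrite /sgn exprS [in RHS]exprS -/(sgn K n) -IH /cst; rewrite -[RHS]/(dmul _ _) /dmul /=.
by congr (_,_); rewrite oppr0 !scaler0 addr0. Qed.
Lemma cst2 : cst 2%:R = 2%:R.
Proof. by rewrite /cst -[RHS]/((1+1, 0+0) : dual) addr0. Qed.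
Lemma lincomb (R : comNzRingType) (L Rr f1 f2 f3 c2 c3 : R) :
  L - Rr = -(f1 + c2*f2 + c3*f3) -> f1 = 0 -> f2 = 0 -> f3 = 0 -> L = Rr.
Proof. move=> H h1 h2 h3; apply/eqP; rewrite -subr_eq0 H h1 h2 h3; apply/eqP; ring. Qed.
End Dual.

Theorem mainTheorem18 (K : closedFieldType) (hchar : [pchar K] =i pred0)
  (V : lmodType K) (A : bool -> V -> Prop) (mu : V -> V -> V) (alpha : V -> V)
  (hA : Z2grading A) (hmu : even_bilinear A mu) (halpha : even_linear A alpha)
  (hflex : hom_flexible A mu alpha) :
  forall (px py pz : bool) (x y z : V), A px x -> A py y -> A pz z ->
    Jtilde mu alpha px py pz x y z = 2%:R *: SA mu alpha px py pz x y z.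
Proof.
move=> px py pz x y z Hx Hy Hz.
case: hmu => hl hr _.
have mu0l w : mu 0 w = 0.
  have := hl 1 0 0 w; rewrite !scale1r addr0 => /(congr1 (fun t => t - mu 0 w)).
  by rewrite subrr addrK.
have mu0r w : mu w 0 = 0.
  have := hr 1 w 0 0; rewrite !scale1r addr0 => /(congr1 (fun t => t - mu w 0)).
  by rewrite subrr addrK.
have muDl u v w : mu (u + v) w = mu u w + mu v w by rewrite -{1}(scale1r u) hl scale1r.
have muDr u v w : mu w (u + v) = mu w u + mu w v by rewrite -{1}(scale1r u) hr scale1r.
have muZl a u w : mu (a *: u) w = a *: mu u w by rewrite -(addr0 (a *: u)) hl mu0l addr0.
have muZr a u w : mu w (a *: u) = a *: mu w u by rewrite -(addr0 (a *: u)) hr mu0r addr0.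
have muNl u w : mu (- u) w = - mu u w by rewrite -scaleN1r muZl scaleN1r.
have muNr u w : mu w (- u) = - mu w u by rewrite -scaleN1r muZr scaleN1r.
have F1 := hflex _ _ _ _ _ _ Hx Hy Hz.
have F2 := hflex _ _ _ _ _ _ Hy Hz Hx.
have F3 := hflex _ _ _ _ _ _ Hz Hx Hy.
move: F1 F2 F3; rewrite /Jtilde /SA /sbr /hasso.
rewrite !(muDl, muDr, muZl, muZr, muNl, muNr).
move=> /(congr1 (@emb _ _)) F1 /(congr1 (@emb _ _)) F2 /(congr1 (@emb _ _)) F3.
apply: emb_inj.
move: F1 F2 F3; rewrite !(embD, embN, embZ, cst_sgn, cst2, emb0).
move=> F1 F2 F3.
apply: (lincomb _ _ _ _ _ _ ((-1)^+(px*(py+pz))) ((-1)^+(pz*(px+py))) _ F1 F2 F3).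
clear F1 F2 F3; by case: px {Hx}; case: py {Hy}; case: pz {Hz} => /=; ring.
Qed.
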